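(* Let $A$ be a skew brace and endow $\mathrm{Spec}\,A$ with the spectral topology. Then the irreducible closed subsets of $\mathrm{Spec}\,A$ are precisely the sets $H(P)=\{Q\in\mathrm{Spec}\,A\mid P\subseteq Q\}$ with $P\in\mathrm{Spec}\,A$.
   Context: A (left) skew brace is a triple $(A,+,\circ)$ where $(A,+)$ and $(A,\circ)$ are groups such that $a\circ(b+c)=a\circ b-a+a\circ c$ for all $a,b,c\in A$; the common identity is $e$. Put $\lambda_a(b)=-a+a\circ b$ and $a*b=-a+a\circ b-b$. An ideal of $A$ is a normal subgroup $I$ of both $(A,+)$ and $(A,\circ)$ with $\lambda_a(I)\subseteq I$ for all $a\in A$. For subsets $I,J\subseteq A$, $I*J=\{i*j\mid i\in I,j\in J\}$. A prime ideal is a proper ideal $P$ such that for any subsets $I,J$ of $A$, $I*J\subseteq P$ implies $I\subseteq P$ or $J\subseteq P$; $\mathrm{Spec}\,A$ is the set of prime ideals. For an ideal $I$, $H(I)=\{P\in\mathrm{Spec}\,A\mid I\subseteq P\}$; the spectral topology on $\mathrm{Spec}\,A$ has as closed sets exactly the sets $H(I)$, $I$ an ideal. A closed subset $S$ is irreducible if it is not the union of two closed subsets $S_1,S_2\subsetneq S$. *)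

(* Defs.v *)
Set Implicit Arguments.

Record skew_brace := SkewBrace {
  car :> Type;
  add : car -> car -> car;
  opp : car -> car;
  e : car;
  circ : car -> car -> car;
  cinv : car -> car;
  addA : forall a b c, add a (add b c) = add (add a b) c;
  add0l : forall a, add e a = a;
  add0r : forall a, add a e = a;
  addNl : forall a, add (opp a) a = e;
  addNr : forall a, add a (opp a) = e;
  circA : forall a b c, circ a (circ b c) = circ (circ a b) c;
  circ1l : forall a, circ e a = a;
  circ1r : forall a, circ a e = a;
  circVl : forall a, circ (cinv a) a = e;
  circVr : forall a, circ a (cinv a) = e;
  brace_comp : forall a b c,
    circ a (add b c) = add (add (circ a b) (opp a)) (circ a c)
}.

Arguments add {s} _ _.
Arguments opp {s} _.
Arguments circ {s} _ _.
Arguments cinv {s} _.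

Section Defs.
Variable A : skew_brace.

Definition lam (a b : A) : A := add (opp a) (circ a b).
Definition star (a b : A) : A := add (add (opp a) (circ a b)) (opp b).

Definition subset (I J : A -> Prop) : Prop := forall x, I x -> J x.

Definition ideal (I : A -> Prop) : Prop :=
  I (e A) /\ (forall x y, I x -> I y -> I (add x y)) /\
  (forall x, I x -> I (opp x)) /\
  (forall a x, I x -> I (add (add a x) (opp a))) /\
  (forall x y, I x -> I y -> I (circ x y)) /\
  (forall x, I x -> I (cinv x)) /\
  (forall a x, I x -> I (circ (circ a x) (cinv a))) /\
  (forall a x, I x -> I (lam a x)).

Definition star_sub (I J P : A -> Prop) : Prop :=
  forall i j, I i -> J j -> P (star i j).

Definition prime_ideal (P : A -> Prop) : Prop :=
  ideal P /\ (exists a, ~ P a) /\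
  (forall I J : A -> Prop, star_sub I J P -> subset I P \/ subset J P).

Definition H (I : A -> Prop) : (A -> Prop) -> Prop :=
  fun P => prime_ideal P /\ subset I P.

Definition spec_closed (S : (A -> Prop) -> Prop) : Prop :=
  exists I, ideal I /\ forall P, S P <-> H I P.

Definition irreducible_closed (S : (A -> Prop) -> Prop) : Prop :=
  spec_closed S /\ (exists P, S P) /\
  ~ (exists S1 S2 : (A -> Prop) -> Prop,
       spec_closed S1 /\ spec_closed S2 /\
       (forall P, S1 P -> S P) /\ (exists P, S P /\ ~ S1 P) /\
       (forall P, S2 P -> S P) /\ (exists P, S P /\ ~ S2 P) /\
       (forall P, S P <-> (S1 P \/ S2 P))).

End Defs.

Arguments lam {A} _ _.
Arguments star {A} _ _.
Arguments subset {A} _ _.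
Arguments ideal {A} _.
Arguments star_sub {A} _ _ _.
Arguments prime_ideal {A} _.
Arguments H {A} _ _.
Arguments spec_closed {A} _.
Arguments irreducible_closed {A} _.

(* Main.v *)
Require Import Defs.
From Stdlib Require Import Classical.

Ltac hx HT := match goal with Hx : forall T, _ -> T _ |- _ => apply Hx; exact HT end.

Lemma inter_ideal (A : skew_brace) (F : (A -> Prop) -> Prop) :
  (forall T, F T -> ideal T) -> ideal (fun x => forall T, F T -> T x).
Proof.
  intros HF; repeat split; intros;
  match goal with HT : F ?T |- _ =>
    destruct (HF _ HT) as (i1&i2&i3&i4&i5&i6&i7&i8);
    first [ exact i1
          | solve [apply i2; hx HT]
          | solve [apply i3; hx HT]
          | solve [apply i4; hx HT]
          | solve [apply i5; hx HT]
          | solve [apply i6; hx HT]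
          | solve [apply i7; hx HT]
          | solve [apply i8; hx HT] ] end.
Qed.

Theorem lemma4p10 (A : skew_brace) (S : (A -> Prop) -> Prop) :
  irreducible_closed S <->
  exists P : A -> Prop, prime_ideal P /\ (forall Q, S Q <-> H P Q).
Proof.
  split.
  - intros [[I [HI HS]] [[Q0 HQ0] Hirr]].
    assert (HSp : forall Q, S Q -> prime_ideal Q) by (intros Q HQ; apply HS in HQ; apply HQ).
    assert (HSI : forall Q, S Q -> subset I Q) by (intros Q HQ; apply HS in HQ; apply HQ).
    exists (fun x => forall Q, S Q -> Q x).
    assert (HPid : ideal (fun x => forall Q, S Q -> Q x)).
    { apply inter_ideal. intros T HT. apply HSp; auto. }
    split; [split; [exact HPid | split] |].
    + destruct (HSp _ HQ0) as [_ [[a Ha] _]]. exists a. intro Hc. apply Ha, Hc, HQ0.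
    + intros J K Hst.
      destruct (classic (subset J (fun x => forall Q, S Q -> Q x))) as [HJ|HJ]; auto.
      destruct (classic (subset K (fun x => forall Q, S Q -> Q x))) as [HK|HK]; auto.
      exfalso. apply Hirr.
      assert (Hcl : forall J0 : A -> Prop, spec_closed (fun Q => S Q /\ subset J0 Q)).
      { intros J0. exists (fun x => forall T, (ideal T /\ subset I T /\ subset J0 T) -> T x).
        split.
        - apply inter_ideal. intros T HT; apply HT.
        - intros P0; split.
          + intros [HP0 HJ0]. split; [apply HSp; auto|].
            intros x Hx. apply Hx. split; [apply HSp; auto| split; auto].
          + intros [Hpr Hsub]. assert (HP0id : ideal P0) by apply Hpr.
            split.
            * apply HS. split; auto. intros x Hx. apply Hsub. intros T [_ [HT _]]. auto.
            * intros x Hx. apply Hsub. intros T [_ [_ HT]]. auto. }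
      assert (Hnot : forall J0 : A -> Prop, ~ subset J0 (fun x => forall Q, S Q -> Q x) ->
                exists Q, S Q /\ ~ (S Q /\ subset J0 Q)).
      { intros J0 HJ0. apply not_all_ex_not in HJ0. destruct HJ0 as [j Hj].
        apply imply_to_and in Hj. destruct Hj as [Jj Hj].
        apply not_all_ex_not in Hj. destruct Hj as [Q HQ].
        apply imply_to_and in HQ. destruct HQ as [SQ nQ].
        exists Q. split; auto. intros [_ Hs]. apply nQ, Hs, Jj. }
      exists (fun Q => S Q /\ subset J Q), (fun Q => S Q /\ subset K Q).
      split; [apply Hcl|]. split; [apply Hcl|].
      split; [intros P0 [? ?]; auto|]. split; [apply Hnot; auto|].
      split; [intros P0 [? ?]; auto|]. split; [apply Hnot; auto|].
      intros P0; split.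
      * intros SP0. destruct (HSp _ SP0) as [_ [_ Hpr]].
        destruct (Hpr J K) as [h|h].
        -- intros i j Ji Kj. apply (Hst i j Ji Kj). auto.
        -- left; auto.
        -- right; auto.
      * intros [[? ?]|[? ?]]; auto.
    + intros Q; split.
      * intros SQ. split; [apply HSp; auto|]. intros x Hx. apply Hx, SQ.
      * intros [Hpr Hsub]. apply HS. split; auto.
        intros x Hx. apply Hsub. intros T HT. apply (HSI T HT), Hx.
  - intros [P [HP HS]]. split; [exists P; split; [apply HP | exact HS]|].
    split; [exists P; apply HS; split; auto; intros x Hx; auto|].
    intros [S1 [S2 [[I1 [_ H1]] [[I2 [_ H2]] [_ [[Q1 [HQ1 nQ1]] [_ [[Q2 [HQ2 nQ2]] Hu]]]]]]]].
    assert (SP : S P) by (apply HS; split; auto; intros x Hx; auto).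
    apply Hu in SP. destruct SP as [SP|SP].
    + apply H1 in SP. destruct SP as [_ Hs]. apply nQ1. apply H1.
      apply HS in HQ1. destruct HQ1 as [Hpr Hsub]. split; auto.
      intros x Hx; auto.
    + apply H2 in SP. destruct SP as [_ Hs]. apply nQ2. apply H2.
      apply HS in HQ2. destruct HQ2 as [Hpr Hsub]. split; auto.
      intros x Hx; auto.
Qed.
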